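(* Let $h_n>0$ and $k_n>0$ be sequences with $h_n\to0$, $k_n\to0$, let $f$ be a real valued function defined on the set $D=\{0,h_1,-k_1,h_2,-k_2,\ldots\}$, and let $L,R$ be real numbers such that \[\frac{f(h_n)}{h_n}\to R\quad\text{and}\quad\frac{f(-k_n)}{-k_n}\to L.\] Then every sequential cord derivative of $f$ at $0$ is a real number between $R$ and $L$ (inclusive).
   Context: $L'\in\overline{\mathbb{R}}=\mathbb{R}\cup\{\pm\infty\}$ is a sequential cord derivative of $f$ at $0$ if there are sequences $h'_n>0$, $k'_n>0$ with $h'_n\to0$, $k'_n\to0$, $h'_n\in D$, $-k'_n\in D$ for all $n$, and $\frac{f(h'_n)-f(-k'_n)}{h'_n+k'_n}\to L'$. *)

(* Defs.v *)
From Stdlib Require Import Reals.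
From Coquelicot Require Import Coquelicot.
Open Scope R_scope.

(* The domain D = {0, h_0, -k_0, h_1, -k_1, ...} (indexing from 0). *)
Definition domD (h k : nat -> R) (x : R) : Prop :=
  x = 0 \/ exists n : nat, x = h n \/ x = - k n.

Definition seq_cord_derivative (D : R -> Prop) (f : R -> R) (L' : Rbar) : Prop :=
  exists h' k' : nat -> R,
    (forall n, 0 < h' n) /\ (forall n, 0 < k' n) /\
    is_lim_seq h' 0 /\ is_lim_seq k' 0 /\
    (forall n, D (h' n)) /\ (forall n, D (- k' n)) /\
    is_lim_seq (fun n => (f (h' n) - f (- k' n)) / (h' n + k' n)) L'.

(* Main.v *)
Require Import Defs.
From Stdlib Require Import Reals Lra Lia Psatz Arith.
From Coquelicot Require Import Coquelicot.
Open Scope R_scope.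

Lemma lim_sub (g u : nat -> R) (F : R -> R) (l : R) :
 (forall m, 0 < g m) -> is_lim_seq (fun m => F (g m)) l -> (forall n, 0 < u n) ->
 is_lim_seq u 0 -> (forall n, exists m, u n = g m) -> is_lim_seq (fun n => F (u n)) l.
Proof.
 intros Hg Hl Hu Hu0 Hum.
 apply is_lim_seq_spec. apply is_lim_seq_spec in Hl. intros eps.
 destruct (Hl eps) as [N HN].
 assert (Hav : forall K, eventually (fun n => forall j, (j < K)%nat -> u n <> g j)).
 { induction K.
   - exists 0%nat. intros; lia.
   - apply is_lim_seq_spec in Hu0. destruct (Hu0 (mkposreal (g K) (Hg K))) as [N1 H1].
     destruct IHK as [N2 H2].
     exists (max N1 N2). intros n Hn j Hj. specialize (H1 n ltac:(lia)). simpl in H1.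
     destruct (Nat.eq_dec j K).
     + subst. intro E. rewrite Rminus_0_r, Rabs_pos_eq in H1 by (left; apply Hu). lra.
     + apply H2; lia. }
 destruct (Hav N) as [N3 H3]. exists N3. intros n Hn.
 destruct (Hum n) as [m Hm]. rewrite Hm. apply HN.
 destruct (le_lt_dec N m) as [l0|l0]; auto. exfalso. apply (H3 n Hn m l0 Hm).
Qed.

Theorem proposition4p4 (h k : nat -> R) (f : R -> R) (L R0 : R) :
  (forall n, 0 < h n) -> (forall n, 0 < k n) ->
  is_lim_seq h 0 -> is_lim_seq k 0 ->
  is_lim_seq (fun n => f (h n) / h n) R0 ->
  is_lim_seq (fun n => f (- k n) / (- k n)) L ->
  forall L' : Rbar, seq_cord_derivative (domD h k) f L' ->
    exists r : R, L' = Finite r /\ Rmin L R0 <= r /\ r <= Rmax L R0.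
Proof.
 intros Hh Hk Hh0 Hk0 HR HL L' [h' [k' [Hh' [Hk' [Hh'0 [Hk'0 [Dh [Dk Hq]]]]]]]].
 assert (Eh : forall n, exists m, h' n = h m).
 { intro n. destruct (Dh n) as [E|[m [E|E]]].
   - specialize (Hh' n); lra.
   - eauto.
   - specialize (Hh' n); specialize (Hk m); lra. }
 assert (Ek : forall n, exists m, k' n = k m).
 { intro n. destruct (Dk n) as [E|[m [E|E]]].
   - specialize (Hk' n); lra.
   - specialize (Hk' n); specialize (Hh m); lra.
   - exists m; lra. }
 assert (Ha := lim_sub h h' (fun x => f x / x) R0 Hh HR Hh' Hh'0 Eh).
 assert (Hb := lim_sub k k' (fun x => f (-x) / (-x)) L Hk HL Hk' Hk'0 Ek).
 simpl in Ha, Hb.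
 assert (Hm1 := Rmin_l L R0). assert (Hm2 := Rmin_r L R0).
 assert (HM1 := Rmax_l L R0). assert (HM2 := Rmax_r L R0).
 set (m := Rmin L R0) in *. set (M := Rmax L R0) in *.
 assert (Hev : forall eps, 0 < eps -> exists N, forall n, (N <= n)%nat ->
   m - eps < (f (h' n) - f (- k' n)) / (h' n + k' n) < M + eps).
 { intros eps He. apply is_lim_seq_spec in Ha. apply is_lim_seq_spec in Hb.
   destruct (Ha (mkposreal eps He)) as [N1 H1]; destruct (Hb (mkposreal eps He)) as [N2 H2].
   exists (max N1 N2). intros n Hn.
   specialize (H1 n ltac:(lia)); specialize (H2 n ltac:(lia)); simpl in H1, H2.
   set (a := f (h' n) / h' n) in *. set (b := f (- k' n) / - k' n) in *.
   assert (Hhn := Hh' n). assert (Hkn := Hk' n).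
   assert (Ea : f (h' n) = h' n * a) by (unfold a; field; lra).
   assert (Eb : f (- k' n) = - k' n * b) by (unfold b; field; lra).
   rewrite Ea, Eb.
   apply Rabs_def2 in H1. apply Rabs_def2 in H2.
   assert (Hs : 0 < / (h' n + k' n)) by (apply Rinv_0_lt_compat; lra).
   assert (Hs1 : (h' n + k' n) * / (h' n + k' n) = 1) by (field; lra).
   unfold Rdiv. set (s := / (h' n + k' n)) in *.
   split.
   - assert (0 < (h' n * (a - (m - eps)) + k' n * (b - (m - eps))) * s)
       by (apply Rmult_lt_0_compat; nra).
     replace ((h' n * a - - k' n * b) * s) with
       ((h' n * (a - (m - eps)) + k' n * (b - (m - eps))) * s + (m - eps) * ((h' n + k' n) * s)) by ring.
     rewrite Hs1. lra.
   - assert (0 < (h' n * ((M + eps) - a) + k' n * ((M + eps) - b)) * s)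
       by (apply Rmult_lt_0_compat; nra).
     replace ((h' n * a - - k' n * b) * s) with
       ((M + eps) * ((h' n + k' n) * s) - (h' n * ((M + eps) - a) + k' n * ((M + eps) - b)) * s) by ring.
     rewrite Hs1. lra. }
 apply is_lim_seq_spec in Hq.
 destruct L' as [r| |].
 - exists r; split; auto. split.
   + apply Rnot_lt_le; intro Hr.
     assert (He : 0 < (m - r) / 2) by lra.
     destruct (Hev _ He) as [N1 H1]. destruct (Hq (mkposreal _ He)) as [N2 H2].
     specialize (H1 (max N1 N2) ltac:(lia)); specialize (H2 (max N1 N2) ltac:(lia)).
     simpl in H2. apply Rabs_def2 in H2. lra.
   + apply Rnot_lt_le; intro Hr.
     assert (He : 0 < (r - M) / 2) by lra.
     destruct (Hev _ He) as [N1 H1]. destruct (Hq (mkposreal _ He)) as [N2 H2].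
     specialize (H1 (max N1 N2) ltac:(lia)); specialize (H2 (max N1 N2) ltac:(lia)).
     simpl in H2. apply Rabs_def2 in H2. lra.
 - exfalso. destruct (Hev 1 Rlt_0_1) as [N1 H1]. destruct (Hq (M + 1)) as [N2 H2].
   specialize (H1 (max N1 N2) ltac:(lia)); specialize (H2 (max N1 N2) ltac:(lia)). lra.
 - exfalso. destruct (Hev 1 Rlt_0_1) as [N1 H1]. destruct (Hq (m - 1)) as [N2 H2].
   specialize (H1 (max N1 N2) ltac:(lia)); specialize (H2 (max N1 N2) ltac:(lia)). lra.
Qed.
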